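(* Let $k\ge 2$ and $l\geq 3$ be integers and $n=2^k$. Then $a_{(l-1)2^{k-1},\,l2^{k-2}+1}+a_{(l-1)2^{k-1},\,l2^{k-2}-2^{k-1}+1}\equiv 0\pmod{2^l}$.
   Context: Let $D:\mathbb{Z}^n\to\mathbb{Z}^n$, $D(x_1,\dots,x_n)=(x_1+x_2,x_2+x_3,\dots,x_n+x_1)$. For integers $r\ge 0$ and $1\le s\le n$, define the integers $a_{r,s}$ by $D^r(0,0,\dots,0,1)=(a_{r,n},a_{r,n-1},\dots,a_{r,1})$; equivalently, $a_{r,s}$ is the coefficient of $x_s$ in the first coordinate of $D^r(x_1,\dots,x_n)$. The second index is read modulo $n$ (representatives $1,\dots,n$). *)

(* Defs.v *)
From mathcomp Require Import all_boot all_order all_algebra.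
Set Implicit Arguments. Unset Strict Implicit. Unset Printing Implicit Defensive.
Import GRing.Theory Num.Theory.
Local Open Scope ring_scope.

(* Vectors in Z^n are represented as functions nat -> int, where the
   coordinate x_{i+1} (1-based) is stored at index i (0-based), i < n. *)

Definition Dmap (n : nat) (x : nat -> int) : nat -> int :=
  fun i => x (i %% n)%N + x (i.+1 %% n)%N.

Definition evec (n s : nat) : nat -> int :=
  fun i => if (i %% n == (s.-1) %% n)%N then 1 else 0.

(* a_{r,s} = coefficient of x_s in the first coordinate of D^r(x_1,...,x_n),
   i.e. the first coordinate of D^r applied to the basis vector e_s
   (D is linear).  The index s is read modulo n (s >= 1). *)
Definition acoef (n r s : nat) : int := iter r (Dmap n) (evec n s) 0%N.

(* Main.v *)
Require Import Defs.
From mathcomp Require Import all_boot all_order all_algebra.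
From mathcomp Require Import zify ring.
Import GRing.Theory.

Local Open Scope ring_scope.

Definition W (N t i : nat) (p : {poly int}) : int :=
  \sum_(j < size p) (if ((i + j) %% N == t)%N then p`_j else 0).

Lemma W_ext N t i (p : {poly int}) B : (size p <= B)%N ->
  W N t i p = \sum_(j < B) (if ((i + j) %% N == t)%N then p`_j else 0).
Proof.
move=> hB; rewrite /W (big_ord_widen B (fun j => if ((i + j) %% N == t)%N then p`_j else 0) hB).
rewrite big_mkcond /=; apply: eq_bigr => j _.
case: ifP => // /negbT; rewrite -leqNgt => h.
by rewrite nth_default // if_same.
Qed.

Lemma W0 N t i : W N t i 0 = 0.
Proof. by rewrite /W size_poly0 big_ord0. Qed.

Lemma WD N t i (p q : {poly int}) : W N t i (p + q) = W N t i p + W N t i q.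
Proof.
rewrite !(@W_ext N t i _ (maxn (size p) (size q))) ?size_polyD ?leq_maxl ?leq_maxr //.
rewrite -big_split /=; apply: eq_bigr => j _.
by case: ifP; rewrite ?coefD ?addr0.
Qed.

Lemma WN N t i (p : {poly int}) : W N t i (- p) = - W N t i p.
Proof.
rewrite /W size_polyN -sumrN; apply: eq_bigr => j _.
by case: ifP; rewrite ?coefN ?oppr0.
Qed.

Lemma WMn N t i (p : {poly int}) c : W N t i (p *+ c) = W N t i p *+ c.
Proof.
elim: c => [|c IH]; first by rewrite !mulr0n W0.
by rewrite !mulrS WD IH.
Qed.

Lemma WX N t i (p : {poly int}) : W N t i (p * 'X) = W N t i.+1 p.
Proof.
rewrite (@W_ext N t i _ (size p).+1); last first.
  by apply: leq_trans (size_polyMleq _ _) _; rewrite size_polyX addn2.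
rewrite big_ord_recl coefMX /= if_same add0r /W.
apply: eq_bigr => j _; rewrite coefMX /= addSnnS.
by [].
Qed.

Lemma WXn N t i (p : {poly int}) a : W N t i (p * 'X^a) = W N t (i + a) p.
Proof.
elim: a i => [|a IH] i; first by rewrite expr0 mulr1 addn0.
by rewrite exprSr mulrA WX IH addSn addnS.
Qed.

Lemma Wmod N t i (p : {poly int}) : W N t (i %% N) p = W N t i p.
Proof. by apply: eq_bigr => j _; rewrite modnDml. Qed.

Lemma WXN N t i (p : {poly int}) : W N t i (p * 'X^N) = W N t i p.
Proof. by rewrite WXn -Wmod modnDr Wmod. Qed.

Lemma We N t i (Z : {poly int}) : W N t i (('X^N - 1) * Z) = 0.
Proof. by rewrite mulrBl mul1r mulrC WD WN WXN subrr. Qed.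

Lemma iterW n s r i :
  iter r (Dmap n) (evec n s) i = W n ((s.-1) %% n) i ((1 + 'X)^+r).
Proof.
elim: r i => [|r IH] i.
  rewrite expr0 /W size_poly1 big_ord1 coef1 /= addn0 /evec.
  by case: ifP.
rewrite iterS /Dmap IH IH !Wmod exprSr mulrDr mulr1 WD WX.
by [].
Qed.

Local Close Scope ring_scope.

Lemma mod_lt2 x M : (x < 2 * M)%N -> x %% M = if (x < M)%N then x else (x - M)%N.
Proof.
move=> h; case: ifP => hx; first by rewrite modn_small.
have -> : x = ((x - M) + M)%N by lia.
by rewrite modnDr modn_small; lia.
Qed.

Lemma modadd x M : (x < 2 * M)%N ->
  (x + M) %% (2 * M) = if (x < M)%N then (x + M)%N else (x - M)%N.
Proof.
move=> h; case: ifP => hx; first by rewrite modn_small //; lia.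
have -> : (x + M = (x - M) + 2 * M)%N by lia.
by rewrite modnDr modn_small; lia.
Qed.

Lemma core (r1 r3 M : nat) : r1 < 2 * M -> r3 < 2 * M ->
  ((r1 == (if r3 < M then r3 + M else r3 - M)) || (r1 == r3))
   = ((if r1 < M then r1 else r1 - M) == (if r3 < M then r3 else r3 - M))
  /\ ~~ ((r1 == (if r3 < M then r3 + M else r3 - M)) && (r1 == r3)).
Proof.
move=> h1 h3.
case: (ltnP r1 M) => c1; case: (ltnP r3 M) => c3;
  rewrite ?c1 ?c3 ?(ltnNge r1 M) ?(ltnNge r3 M) ?c1 ?c3 /=; split; lia.
Qed.

Lemma modfold M a j : (0 < M)%N -> (M <= a)%N ->
  ((j %% (2 * M) == a %% (2 * M)) || (j %% (2 * M) == (a - M) %% (2 * M)))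
     = (j %% M == a %% M)
  /\ ~~ ((j %% (2 * M) == a %% (2 * M)) && (j %% (2 * M) == (a - M) %% (2 * M))).
Proof.
move=> hM ha.
set b := (a - M)%N.
have hab : a = (b + M)%N by rewrite /b subnK.
have h1 : (j %% (2 * M) < 2 * M)%N by rewrite ltn_mod; lia.
have h3 : (b %% (2 * M) < 2 * M)%N by rewrite ltn_mod; lia.
have e1 : j %% M = (j %% (2 * M)) %% M.
  by apply/esym/eqP; rewrite (modn_dvdm j (dvdn_mull 2 (dvdnn M))).
have e2 : a %% (2 * M) = (b %% (2 * M) + M) %% (2 * M) by rewrite modnDml hab.
have e3 : a %% M = (b %% (2 * M)) %% M.
  rewrite hab modnDr; apply/esym/eqP.
  by rewrite (modn_dvdm b (dvdn_mull 2 (dvdnn M))).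
rewrite e1 e2 e3 (modadd _ _ h3) (mod_lt2 _ _ h1) (mod_lt2 _ _ h3).
exact: core.
Qed.

Local Open Scope ring_scope.

Lemma Wfold M a (p : {poly int}) : (0 < M)%N -> (M <= a)%N ->
  W (2 * M) (a %% (2 * M)) 0 p + W (2 * M) ((a - M) %% (2 * M)) 0 p
  = W M (a %% M) 0 p.
Proof.
move=> hM ha; rewrite /W -big_split /=; apply: eq_bigr => j _.
have [e ne] := modfold M a j hM ha.
move: ne; rewrite !add0n -e.
set A := (j %% (2 * M) == a %% (2 * M))%N; set B := (j %% (2 * M) == (a - M) %% (2 * M))%N.
by case: A; case: B => //= _; rewrite ?addr0 ?add0r.
Qed.

Lemma binom_pow2 j : exists R : {poly int},
  (1 + 'X)^+(2 ^ j.+1) = 1 + 'X ^+ (2 ^ j.+1) + 2 * 'X ^+ (2 ^ j) + 4 * R.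
Proof.
elim: j => [|j [R IH]].
  exists 0; rewrite expn1 expn0; ring.
set a := 'X ^+ (2 ^ j) : {poly int}.
have ha1 : 'X ^+ (2 ^ j.+1) = a ^+ 2 :> {poly int} by rewrite expnSr exprM.
have ha2 : 'X ^+ (2 ^ j.+2) = a ^+ 4 :> {poly int}.
  by rewrite (expnSr 2 j.+1) expnSr -mulnA exprM.
exists (a * (1 + a^+2) + 2 * R * (1 + a^+2) + a^+2 + 4 * a * R + 4 * R^+2).
rewrite ha2 ha1 (expnSr 2 j.+1) exprM IH ha1 /a; ring.
Qed.

Lemma pow_e (x e y : {poly int}) j : exists Y, (x + e * y)^+j = x^+j + e * Y.
Proof.
elim: j => [|j [Y IH]]; first by exists 0; rewrite !expr0 mulr0 addr0.
exists (y * x^+j + x * Y + e * y * Y); rewrite !exprS IH; ring.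
Qed.

Lemma key j l : (3 <= l)%N -> exists A Z : {poly int},
  ((1 + 'X)^+(2 ^ j.+1))^+(l - 1) = 2^+l * A + ('X ^+ (2 ^ j.+1) - 1) * Z.
Proof.
move=> hl.
have [R HR] := binom_pow2 j.
set a := 'X ^+ (2 ^ j) : {poly int}.
have ha1 : 'X ^+ (2 ^ j.+1) = a ^+ 2 :> {poly int} by rewrite expnSr exprM.
rewrite HR ha1.
set T := 1 + a + 2 * R.
have HP : 1 + a ^+ 2 + 2 * a + 4 * R = 2 * T + (a^+2 - 1) * 1 by rewrite /T; ring.
have [Y HY] := pow_e (2 * T) (a^+2 - 1) 1 (l - 3).
have hl1 : (l - 1 = (l - 3) + 2)%N by lia.
have hl2 : (l = (l - 3) + 3)%N by lia.
rewrite hl1 exprD HP HY exprMn.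
set u := (2 : {poly int})^+(l - 3).
set T' := T ^+ (l - 3).
exists (T' * (1 + a + 2 * R * (1 + a) + 2 * R^+2)).
exists (u * T' * (4 + 4 * T + (a^+2 - 1)) + Y * (2 * T + (a^+2 - 1) * 1)^+2).
rewrite {1}hl2 exprD -/u /T; ring.
Qed.

Theorem lemma4p7 (k l : nat) (hk : (2 <= k)%N) (hl : (3 <= l)%N) :
  let n := (2 ^ k)%N in
  ((Posz (2 ^ l)%N) %|
     (acoef n ((l - 1) * 2 ^ (k - 1))%N (l * 2 ^ (k - 2) + 1)%N
      + acoef n ((l - 1) * 2 ^ (k - 1))%N (l * 2 ^ (k - 2) - 2 ^ (k - 1) + 1)%N)%R)%Z.
Proof.
cbv zeta; rewrite /acoef !iterW !addn1 /=.
have [j hj] : exists j, k = j.+2 by exists (k - 2)%N; lia.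
have e1 : (k - 1 = j.+1)%N by lia.
have e2 : (k - 2 = j)%N by lia.
rewrite e1 e2 hj.
have e3 : (2 ^ j.+2 = 2 * 2 ^ j.+1)%N by rewrite expnS.
rewrite e3 Wfold; last 2 first.
- by rewrite expn_gt0.
- by rewrite expnS leq_mul2r; apply/orP; right; lia.
rewrite (mulnC (l - 1)%N) exprM.
have [A [Z HAZ]] := key j l hl.
rewrite HAZ WD We addr0 -natrX mulr_natl WMn -mulr_natr natz.
by apply: dvdz_mull; exact: dvdzz.
Qed.
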